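(* Let $G$ be a finite group generated by reflections of a real Euclidean space $V$ with root system $R$, and $\mathcal M_G\subset V\otimes\mathbb C$ the complement of the complexified reflection hyperplanes. Let $\sigma\in G$ be a special involution, with $V_1,V_2,R_1,R_2,G_1,G_2$ as in the context. Then every connected component of the fixed set $F_{\bar\sigma}=\{z\in\mathcal M_G:\sigma(\bar z)=z\}$ is contractible, and the number of connected components is $|G_1|\,|G_2|$.
   Context: For an involution $\sigma\in G$ (including the identity), let $V_1=\{v:\sigma v=-v\}$ and $V_2=\{v:\sigma v=v\}$, $R_i=R\cap V_i$, and $G_i$ the subgroup of $G$ generated by the reflections in the roots of $R_i$ ($i=1,2$). The involution $\sigma$ is called special if for every root $a\in R$ at least one of the orthogonal projections of $a$ onto $V_1$ and onto $V_2$ is proportional to a root from $R_1$ or $R_2$. *)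

(* Defs.v *)
From HB Require Import structures.
From mathcomp Require Import all_boot all_order all_algebra.
From mathcomp Require Import all_classical all_reals all_analysis.
Set Implicit Arguments. Unset Strict Implicit. Unset Printing Implicit Defensive.
Import Order.TTheory GRing.Theory Num.Theory.
Import numFieldNormedType.Exports.
Local Open Scope classical_set_scope.
Local Open Scope ring_scope.

Section Defs.
Variables (R : realType) (n : nat).

(* The Euclidean space V = R^n, realised as row vectors 'rV[R]_n with the
   standard inner product; linear maps act on the right: v |-> v *m g. *)
Definition dotv (u v : 'rV[R]_n) : R := (u *m v^T) 0 0.

Definition refl_mx (a : 'rV[R]_n) : 'M[R]_n :=
  1%:M - (2 / dotv a a) *: (a^T *m a).

Definition is_mxgroup (S : set 'M[R]_n) : Prop :=
  [/\ S 1%:M, (forall x y, S x -> S y -> S (x *m y))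
    & (forall x, S x -> S (invmx x))].

Definition gen_group (S : set 'M[R]_n) : set 'M[R]_n :=
  \bigcap_(H in [set H | is_mxgroup H /\ S `<=` H]) H.

Definition root_system (Rt : set 'rV[R]_n) : Prop :=
  [/\ finite_set Rt,
      (forall a, Rt a -> a != 0),
      (forall a c, Rt a -> (Rt (c *: a) <-> (c = 1 \/ c = -1)))
    & (forall a b, Rt a -> Rt b -> Rt (b *m refl_mx a))].

Definition is_orth_proj (W : set 'rV[R]_n) (a p : 'rV[R]_n) : Prop :=
  W p /\ forall w, W w -> dotv (a - p) w = 0.

Definition minus_eigsp (s : 'M[R]_n) : set 'rV[R]_n := [set v | v *m s = - v].
Definition plus_eigsp (s : 'M[R]_n) : set 'rV[R]_n := [set v | v *m s = v].

Definition proportional_to_root (S : set 'rV[R]_n) (p : 'rV[R]_n) : Prop :=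
  exists c b, S b /\ p = c *: b.

Definition special_involution (Rt : set 'rV[R]_n) (G : set 'M[R]_n)
    (s : 'M[R]_n) : Prop :=
  [/\ G s, s *m s = 1%:M &
    let R1 := Rt `&` minus_eigsp s in
    let R2 := Rt `&` plus_eigsp s in
    forall a, Rt a ->
      (exists p, is_orth_proj (minus_eigsp s) a p /\
                 proportional_to_root (R1 `|` R2) p) \/
      (exists p, is_orth_proj (plus_eigsp s) a p /\
                 proportional_to_root (R1 `|` R2) p)].

(* V (x) C is realised as V * V : z = x + i y  <->  (x, y).
   The complexified hyperplane of a is { z | <a, z> = 0 }, i.e. <a,x> = <a,y> = 0. *)
Definition complement_arrangement (Rt : set 'rV[R]_n)
  : set ('rV[R]_n * 'rV[R]_n) :=
  [set z | forall a, Rt a -> ~ (dotv a z.1 = 0 /\ dotv a z.2 = 0)].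

(* F_{sigma bar} = { z in M_G | sigma (conj z) = z }; conj (x,y) = (x,-y) and
   sigma acts C-linearly: sigma (x, y) = (x sigma, y sigma). *)
Definition fixed_set (Rt : set 'rV[R]_n) (s : 'M[R]_n)
  : set ('rV[R]_n * 'rV[R]_n) :=
  complement_arrangement Rt `&`
  [set z | (z.1 *m s, - (z.2 *m s)) = z].

End Defs.
Arguments refl_mx {R n}.

Definition contractible (R : realType) {T : topologicalType} (C : set T) : Prop :=
  C !=set0 /\
  exists (x0 : T) (H : R * T -> T),
    [/\ {within [set p : R * T | 0 <= p.1 <= 1 /\ C p.2], continuous H},
        (forall x, C x -> H (0, x) = x /\ H (1, x) = x0)
      & (forall t x, 0 <= t <= 1 -> C x -> C (H (t, x)))].

Definition components {T : topologicalType} (A : set T) : set (set T) :=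
  [set C | exists2 z, A z & C = connected_component A z].

(* Main.v *)
Require Import Defs.
From HB Require Import structures.
From mathcomp Require Import all_boot all_order all_algebra.
From mathcomp Require Import all_classical all_reals all_analysis.
From mathcomp Require Import ring lra zify.
Import Order.TTheory GRing.Theory Num.Theory.
Import numFieldNormedType.Exports.
Local Open Scope classical_set_scope.
Local Open Scope ring_scope.
Set Implicit Arguments. Unset Strict Implicit. Unset Printing Implicit Defensive.
Section LinAlg.
Variables (R : realType) (n : nat).
Implicit Types (u v w a b : 'rV[R]_n) (g h : 'M[R]_n).

Lemma dotvE u v : dotv u v = \sum_i u 0 i * v 0 i.
Proof. by rewrite /dotv mxE; apply: eq_bigr => i _; rewrite mxE. Qed.

Lemma dotvC u v : dotv u v = dotv v u.
Proof. by rewrite !dotvE; apply: eq_bigr => i _; rewrite mulrC. Qed.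

Lemma dotvDl u v w : dotv (u + v) w = dotv u w + dotv v w.
Proof. by rewrite /dotv mulmxDl mxE. Qed.

Lemma dotvZl c u w : dotv (c *: u) w = c * dotv u w.
Proof. by rewrite /dotv -scalemxAl mxE. Qed.

Lemma dotvNl u w : dotv (- u) w = - dotv u w.
Proof. by rewrite -scaleN1r dotvZl mulN1r. Qed.

Lemma dotvBl u v w : dotv (u - v) w = dotv u w - dotv v w.
Proof. by rewrite dotvDl dotvNl. Qed.

Lemma dotv0l w : dotv 0 w = 0.
Proof. by rewrite /dotv mul0mx mxE. Qed.

Lemma dotvDr u v w : dotv w (u + v) = dotv w u + dotv w v.
Proof. by rewrite dotvC dotvDl !(dotvC w). Qed.

Lemma dotvZr c u w : dotv w (c *: u) = c * dotv w u.
Proof. by rewrite dotvC dotvZl dotvC. Qed.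

Lemma dotvNr u w : dotv w (- u) = - dotv w u.
Proof. by rewrite dotvC dotvNl dotvC. Qed.

Lemma dotvBr u v w : dotv w (u - v) = dotv w u - dotv w v.
Proof. by rewrite dotvDr dotvNr. Qed.

Lemma dotv0r w : dotv w 0 = 0.
Proof. by rewrite dotvC dotv0l. Qed.

Lemma dotv_ge0 u : 0 <= dotv u u.
Proof. by rewrite dotvE; apply: sumr_ge0 => i _; rewrite -expr2 sqr_ge0. Qed.

Lemma dotv_gt0 u : u != 0 -> 0 < dotv u u.
Proof.
move=> u0; rewrite lt_def dotv_ge0 andbT; apply: contra u0 => /eqP.
rewrite dotvE => /eqP; rewrite psumr_eq0 => [/allP H|i _]; last by rewrite -expr2 sqr_ge0.
apply/eqP/rowP => i; rewrite mxE.
have -> : (0 : 'I_1) = ord0 by apply/val_inj.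

by have /implyP/(_ isT) := H i (mem_index_enum _); rewrite mulf_eq0 orbb => /eqP.
Qed.

Lemma dotv_eq0 u : (dotv u u == 0) = (u == 0).
Proof.
apply/idP/idP => [|/eqP->]; last by rewrite dotv0l.
by apply: contraLR => /dotv_gt0 /lt0r_neq0.
Qed.

Lemma dotv_mulmx u v g : dotv (u *m g) v = dotv u (v *m g^T).
Proof. by rewrite /dotv trmx_mul trmxK mulmxA. Qed.

Lemma mul_outer v a : v *m (a^T *m a) = dotv v a *: a.
Proof. by rewrite mulmxA [v *m a^T]mx11_scalar mul_scalar_mx. Qed.

Lemma refl_act v a : v *m refl_mx a = v - (2 / dotv a a * dotv v a) *: a.
Proof.
by rewrite /refl_mx mulmxBr mulmx1 -scalemxAr mul_outer scalerA.
Qed.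

Lemma mx_ext g h : (forall v : 'rV[R]_n, v *m g = v *m h) -> g = h.
Proof. by move=> H; apply/row_matrixP => i; rewrite !rowE H. Qed.

Lemma refl_tr a : (refl_mx a)^T = refl_mx a.
Proof.
by rewrite /refl_mx linearB /= linearZ /= trmx1 trmx_mul trmxK.
Qed.

Lemma dot_refl v a : a != 0 -> dotv (v *m refl_mx a) a = - dotv v a.
Proof.
move=> a0; rewrite refl_act dotvBl dotvZl.
have d0 : dotv a a != 0 by rewrite dotv_eq0.
by rewrite mulrAC divfK // mulr_natl mulr2n opprD addrA subrr add0r.
Qed.

Lemma refl_invol a : a != 0 -> refl_mx a *m refl_mx a = 1%:M.
Proof.
move=> a0; apply: mx_ext => v; rewrite mulmx1 mulmxA.
rewrite (refl_act (v *m refl_mx a)) dot_refl // refl_act.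
by rewrite mulrN scaleNr opprK subrK.
Qed.

Lemma refl_orth a : a != 0 -> refl_mx a *m (refl_mx a)^T = 1%:M.
Proof. by move=> a0; rewrite refl_tr refl_invol. Qed.

Definition orth g := g *m g^T = 1%:M.

Lemma orthC g : orth g -> g^T *m g = 1%:M.
Proof. exact: mulmx1C. Qed.

Lemma orth_inv g : orth g -> invmx g = g^T.
Proof.
move=> og; have [gu _] := mulmx1_unit og.
by rewrite -[invmx g]mulmx1 -og mulmxA mulVmx // mul1mx.
Qed.

Lemma orth_dot g u v : orth g -> dotv (u *m g) (v *m g) = dotv u v.
Proof. by move=> og; rewrite dotv_mulmx -mulmxA og mulmx1. Qed.

Lemma orthT g : orth g -> orth g^T.
Proof. by move=> og; rewrite /orth trmxK orthC. Qed.

Lemma orthM g h : orth g -> orth h -> orth (g *m h).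
Proof.
by move=> og oh; rewrite /orth trmx_mul mulmxA -(mulmxA g) oh mulmx1 og.
Qed.

Lemma refl_conj a g : a != 0 -> orth g ->
  refl_mx (a *m g) = g^T *m refl_mx a *m g.
Proof.
move=> a0 og; apply: mx_ext => v; rewrite refl_act !mulmxA refl_act.
rewrite mulmxBl -scalemxAl -mulmxA (orthC og) mulmx1 orth_dot //.
by rewrite dotv_mulmx trmxK.
Qed.

Lemma refl_opp a : refl_mx (- a) = refl_mx a.
Proof. rewrite /refl_mx dotvNl dotvNr opprK. have -> : (- a)^T = - a^T by apply/matrixP => i j; rewrite !mxE. by rewrite mulNmx mulmxN opprK. Qed.

End LinAlg.
Section Groups.
Variables (R : realType) (n : nat).
Implicit Types (S K : set 'M[R]_n).

Lemma gen_sub S K : is_mxgroup K -> S `<=` K -> gen_group S `<=` K.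
Proof. by move=> gK SK x; apply; split. Qed.

Lemma gen_gens S : S `<=` gen_group S.
Proof. by move=> x Sx H [_]; apply. Qed.

Lemma gen_grp S : is_mxgroup (gen_group S).
Proof.
split.
- by move=> H [[]].
- by move=> x y Gx Gy H hH; case: (hH) => [[_ M _] _]; apply: M; [apply: Gx|apply: Gy].
- by move=> x Gx H hH; case: (hH) => [[_ _ I] _]; apply: I; apply: Gx.
Qed.

Lemma gen_1 S : gen_group S 1%:M.
Proof. by case: (gen_grp S). Qed.
Lemma gen_M S x y : gen_group S x -> gen_group S y -> gen_group S (x *m y).
Proof. by case: (gen_grp S) => _ M _; apply: M. Qed.
Lemma gen_V S x : gen_group S x -> gen_group S (invmx x).
Proof. by case: (gen_grp S) => _ _ I; apply: I. Qed.

End Groups.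

Section Hgroup.
Variables (R : realType) (n : nat) (S U : set 'rV[R]_n).
Hypothesis hS0 : forall a, S a -> a != 0.
Hypothesis hSrefl : forall a b, S a -> S b -> S (b *m refl_mx a).
Hypothesis hSU : S `<=` U.
Hypothesis hU : forall u v c, U u -> U v -> U (u + c *: v).

Definition Hset : set 'M[R]_n :=
  [set g | [/\ orth g, (forall a, S a -> S (a *m g) /\ S (a *m g^T))
     & (forall x, U x -> U (x *m g) /\ U (x *m g^T))]].

Lemma Hset_grp : is_mxgroup Hset.
Proof.
split.
- split; first by rewrite /orth trmx1 mulmx1.
  + by move=> a Sa; rewrite trmx1 mulmx1.
  + by move=> x Ux; rewrite trmx1 mulmx1.
- move=> x y [ox Sx Ux] [oy Sy Uy]; split; first exact: orthM.
  + move=> a Sa; rewrite trmx_mul !mulmxA; split.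
      by apply: (Sy _ (Sx _ Sa).1).1.
    by apply: (Sx _ (Sy _ Sa).2).2.
  + move=> a Sa; rewrite trmx_mul !mulmxA; split.
      by apply: (Uy _ (Ux _ Sa).1).1.
    by apply: (Ux _ (Uy _ Sa).2).2.
- move=> x [ox Sx Ux]; rewrite orth_inv //; split; first exact: orthT.
  + by move=> a Sa; rewrite trmxK; have [] := Sx a Sa; split.
  + by move=> a Sa; rewrite trmxK; have [] := Ux a Sa; split.
Qed.

Lemma refl_Hset : refl_mx @` S `<=` Hset.
Proof.
move=> _ [a Sa <-]; split; first exact: refl_orth (hS0 Sa).
- by move=> b Sb; rewrite refl_tr; split; apply: hSrefl.
- move=> x Ux; rewrite refl_tr refl_act.
  have U' : U (x - (2 / dotv a a * dotv x a) *: a).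
    by rewrite -scaleNr; apply: hU => //; apply: hSU.
  by split.
Qed.

Lemma gen_Hset : gen_group (refl_mx @` S) `<=` Hset.
Proof. exact: gen_sub Hset_grp refl_Hset. Qed.

End Hgroup.
Section Helpers.
Variable R : realType.

Lemma seq_argmax (T : eqType) (s : seq T) (f : T -> R) x :
  x \in s -> exists2 a, a \in s & forall b, b \in s -> f b <= f a.
Proof.
elim: s x => [//|y s IH] x _.
case: s IH => [|z s] IH.
  by exists y; rewrite ?inE // => b; rewrite inE => /eqP->.
have [a sa Ha] := IH z (mem_head _ _).
have [fa|fa] := leP (f y) (f a).
  exists a; first by rewrite inE sa orbT.
  by move=> b; rewrite inE => /orP[/eqP->//|/Ha].
exists y; first by rewrite inE eqxx.
move=> b; rewrite inE => /orP[/eqP->//|/Ha hb].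
by apply: le_trans hb (ltW fa).
Qed.

Lemma finite_argmax (T : eqType) (A : set T) (f : T -> R) :
  finite_set A -> A !=set0 -> exists2 a, A a & forall b, A b -> f b <= f a.
Proof.
move=> /finite_seqP[s ->] [x xs].
have [a sa Ha] := seq_argmax f xs.
by exists a.
Qed.

Lemma sgn_same (p q : R) : p != 0 -> q != 0 -> 0 <= p * q -> (0 < p) = (0 < q).
Proof.
move=> p0 q0 pq; have [pp|pn] := ltP 0 p; have [qp|qn] := ltP 0 q => //.
- have : q < 0 by rewrite lt_neqAle q0 qn.
  by rewrite -(pmulr_rlt0 _ pp) => /(lt_le_trans)/(_ pq); rewrite ltxx.
- have : p < 0 by rewrite lt_neqAle p0 pn.
  by rewrite -(pmulr_llt0 _ qp) => /(lt_le_trans)/(_ pq); rewrite ltxx.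
Qed.
End Helpers.
Section Coxeter.
Variables (R : realType) (n : nat) (S U : set 'rV[R]_n) (lam : 'rV[R]_n).
Hypothesis hS0 : forall a, S a -> a != 0.
Hypothesis hSpm : forall a c, S a -> S (c *: a) -> c = 1 \/ c = -1.
Hypothesis hSrefl : forall a b, S a -> S b -> S (b *m refl_mx a).
Hypothesis hSfin : finite_set S.
Hypothesis hSU : S `<=` U.
Hypothesis hU : forall u v c, U u -> U v -> U (u + c *: v).
Hypothesis hlam : forall a, S a -> dotv a lam != 0.
Implicit Types (a b x : 'rV[R]_n) (s t ws : seq 'rV[R]_n) (w : 'M[R]_n).
Let W := gen_group (refl_mx @` S).
Hypothesis hWfin : finite_set W.

Let Pos a := S a /\ 0 < dotv a lam.

Lemma refl_self a : a != 0 -> a *m refl_mx a = - a.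
Proof.
move=> a0; rewrite refl_act divfK ?dotv_eq0 //.
by rewrite scaler_nat mulr2n opprD addrA subrr add0r.
Qed.

Lemma SN a : S a -> S (- a).
Proof. by move=> Sa; rewrite -refl_self ?hS0 //; apply: hSrefl. Qed.

Lemma notPos a : S a -> ~ Pos a -> Pos (- a).
Proof.
move=> Sa nP; split; first exact: SN.
rewrite dotvNl oppr_gt0 lt_neqAle hlam //=; rewrite leNgt.
by apply/negP => h; apply: nP.
Qed.

Lemma Pos_neg a : Pos (- a) -> dotv a lam < 0.
Proof. by case=> _; rewrite dotvNl oppr_gt0. Qed.

Fixpoint prodw (ws : seq 'rV[R]_n) : 'M[R]_n :=
  if ws is a :: ws' then refl_mx a *m prodw ws' else 1%:M.

Lemma prodw_cat s t : prodw (s ++ t) = prodw s *m prodw t.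
Proof. by elim: s => [|a s IH] /=; rewrite ?mul1mx // IH mulmxA. Qed.

Lemma prodw_tr ws : (prodw ws)^T = prodw (rev ws).
Proof.
elim: ws => [|a s IH] /=; first by rewrite trmx1.
by rewrite trmx_mul IH refl_tr rev_cons -cats1 prodw_cat /= mulmx1.
Qed.

Definition allS (ws : seq 'rV[R]_n) := forall a, a \in ws -> S a.

Lemma prodw_orth ws : allS ws -> orth (prodw ws).
Proof.
elim: ws => [|a s IH] /= hs; first by rewrite /orth trmx1 mulmx1.
apply: orthM; first by apply: refl_orth; apply: hS0; apply: hs; rewrite inE eqxx.
by apply: IH => b bs; apply: hs; rewrite inE bs orbT.
Qed.

Lemma prodw_W ws : allS ws -> W (prodw ws).
Proof.
elim: ws => [|a s IH] /= hs; first exact: gen_1.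
apply: gen_M; first by apply: gen_gens; exists a => //; apply: hs; rewrite inE eqxx.
by apply: IH => b bs; apply: hs; rewrite inE bs orbT.
Qed.

Lemma W_H : W `<=` Hset S U.
Proof. exact: (gen_Hset hS0 hSrefl hSU hU). Qed.

Lemma W_orth w : W w -> orth w.
Proof. by move=> /W_H []. Qed.

Lemma W_S w a : W w -> S a -> S (a *m w).
Proof. by move=> /W_H [_ h _] /h []. Qed.

Lemma W_ST w a : W w -> S a -> S (a *m w^T).
Proof. by move=> /W_H [_ h _] /h []. Qed.

Lemma W_U w x : W w -> U x -> U (x *m w).
Proof. by move=> /W_H [_ _ h] /h []. Qed.

Lemma W_T w : W w -> W w^T.
Proof. by move=> Ww; rewrite -orth_inv; [apply: gen_V | exact: W_orth]. Qed.

Lemma trans_chamber x : U x -> (forall a, S a -> dotv a x != 0) ->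
  exists2 w, W w & forall a, S a -> (0 < dotv a (x *m w)) = (0 < dotv a lam).
Proof.
move=> Ux hx.
have W0 : W !=set0 by exists 1%:M; apply: gen_1.
have [w Ww Hw] := finite_argmax (fun w => dotv (x *m w) lam) hWfin W0.
exists w => // a Sa.
have Ws : W (w *m refl_mx a) by apply: gen_M Ww (gen_gens _); exists a.
have := Hw _ Ws; rewrite /= mulmxA refl_act dotvBl dotvZl.
rewrite gerBl => h.
have k0 : 0 < 2 / dotv a a by rewrite divr_gt0 // dotv_gt0 ?hS0.
have h' : 0 <= dotv (x *m w) a * dotv a lam.
  by rewrite -(pmulr_rge0 _ k0) mulrA.
rewrite (dotvC a (x *m w)); apply: sgn_same => //; last exact: hlam.
by rewrite dotv_mulmx dotvC; apply: hx; apply: W_ST.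
Qed.

Definition cone (D : seq 'rV[R]_n) v :=
  exists c : 'rV[R]_n -> R, (forall x, 0 <= c x) /\ v = \sum_(d <- D) c d *: d.

Definition goodD D :=
  [/\ uniq D, (forall d, d \in D -> Pos d) & (forall v, Pos v -> cone D v)].
Definition minD D := forall d, d \in D -> ~ cone (rem d D) d.

Lemma cone_subst D d v : d \in D -> cone (rem d D) d -> cone D v ->
  cone (rem d D) v.
Proof.
move=> dD [e [e0 de]] [c [c0 vc]].
exists (fun x => c d * e x + c x); split.
  by move=> x; rewrite addr_ge0 ?mulr_ge0.
rewrite vc (big_rem d dD) /=.
under [RHS]eq_bigr do rewrite scalerDl -scalerA.
by rewrite big_split /= -scaler_sumr -de.
Qed.

Lemma good_rem D d : goodD D -> d \in D -> cone (rem d D) d -> goodD (rem d D).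
Proof.
move=> [uD pD cD] dD cd; split; first exact: rem_uniq.
- by move=> x /mem_rem; apply: pD.
- by move=> v /cD; apply: cone_subst.
Qed.

Lemma exists_good : exists D, goodD D.
Proof.
have [s Ss] := (finite_seqP S).1 hSfin.
exists (undup [seq a <- s | 0 < dotv a lam]); split; first exact: undup_uniq.
  by move=> d; rewrite mem_undup mem_filter => /andP[h ds]; split; rewrite // Ss.
move=> v [Sv vp]; have vs : v \in undup [seq a <- s | 0 < dotv a lam].
  by rewrite mem_undup mem_filter vp /=; have : [set` s] v by rewrite -Ss.
exists (fun x => if x == v then 1 else 0); split.
  by move=> x; case: ifP.
rewrite (big_rem v vs) /= eqxx scale1r big1_seq ?addr0 //.
move=> x /andP[_ xr]; case: eqP xr => [->|_ _]; last by rewrite scale0r.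
by rewrite mem_rem_uniq ?undup_uniq //= inE eqxx.
Qed.

Lemma exists_min : exists D, goodD D /\ minD D.
Proof.
have [D0 g0] := exists_good.
suff : forall k D, (size D <= k)%N -> goodD D -> exists D, goodD D /\ minD D.
  by move/(_ (size D0) D0 (leqnn _) g0).
elim=> [|k IH] D sD gD.
  exists D; split => // d; move: sD; rewrite leqn0 => /nilP ->; by [].
have [m|] := pselect (minD D); first by exists D.
move=> /existsNP [d /not_implyP [dD cd]]; move: cd => /contrapT cd.
apply: (IH (rem d D)); last exact: good_rem.
by move: sD; rewrite size_rem //; case: (size D) => // m; rewrite ltnS.
Qed.

Lemma dot_suml (D : seq 'rV[R]_n) (c : 'rV[R]_n -> R) v :
  dotv (\sum_(d <- D) c d *: d) v = \sum_(d <- D) c d * dotv d v.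
Proof.
elim: D => [|x D IH]; first by rewrite !big_nil dotv0l.
by rewrite !big_cons dotvDl dotvZl IH.
Qed.

Lemma Pos_dotv a : Pos a -> 0 < dotv a lam.
Proof. by case. Qed.

Lemma simple_refl D d b : goodD D -> minD D -> d \in D -> Pos b -> b != d ->
  Pos (b *m refl_mx d).
Proof.
move=> [uD pD cD] mD dD [Sb bp] bd.
have [Sd dp] := pD d dD.
have Sbs : S (b *m refl_mx d) := hSrefl Sd Sb.
split => //; rewrite ltNge; apply/negP => hle.
set k := 2 / dotv d d * dotv b d.
have e1 : b *m refl_mx d = b - k *: d by rewrite refl_act.
have Pm : Pos (k *: d - b).
  split; first by rewrite -opprB -e1; apply: SN.
  rewrite -opprB -e1 dotvNl oppr_gt0 lt_neqAle hle andbT; exact: hlam.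
have [c [c0 bc]] := cD b (conj Sb bp).
have [e [e0 me]] := cD _ Pm.
have kd : k *: d = \sum_(x <- D) (c x + e x) *: x.
  under eq_bigr do rewrite scalerDl.
  by rewrite big_split /= -bc -me addrC subrK.
have kp : 0 < k.
  have : 0 < dotv (k *: d) lam.
    by rewrite -(subrK b (k *: d)) dotvDl addr_gt0 // Pos_dotv.
  by rewrite dotvZl pmulr_lgt0.
pose f x := (c x + e x) / k.
have f0 x : 0 <= f x by rewrite divr_ge0 ?addr_ge0 // ltW.
have dsum : d = f d *: d + \sum_(x <- rem d D) f x *: x.
  have -> : f d *: d + \sum_(x <- rem d D) f x *: x = \sum_(x <- D) f x *: x.
    by rewrite [RHS](big_rem d dD).
  under eq_bigr do rewrite /f mulrC -scalerA.
  by rewrite -scaler_sumr -kd scalerA mulVf ?scale1r // gt_eqF.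
have [fd|fd] := ltP (f d) 1.
  apply: (mD d dD); exists (fun x => f x / (1 - f d)); split.
    by move=> x; rewrite divr_ge0 // subr_ge0 ltW.
  have h1 : (1 - f d) *: d = \sum_(x <- rem d D) f x *: x.
    by rewrite scalerBl scale1r {1}dsum addrAC subrr add0r.
  under eq_bigr do rewrite mulrC -scalerA.
  rewrite -scaler_sumr -h1 scalerA mulVf ?scale1r //.
  by rewrite subr_eq0 eq_sym lt_eqF.
have hz : (f d - 1) *: d + \sum_(x <- rem d D) f x *: x = 0.
  by rewrite scalerBl scale1r addrAC -dsum subrr.
have := congr1 (fun v => dotv v lam) hz; rewrite /= dotvDl dotvZl dot_suml dotv0l.
have s0 : 0 <= \sum_(x <- rem d D) f x * dotv x lam.
  rewrite big_seq_cond; apply: sumr_ge0 => x /andP[/mem_rem xD _].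
  by rewrite mulr_ge0 // ltW // Pos_dotv //; apply: pD.
have t0 : 0 <= (f d - 1) * dotv d lam by rewrite mulr_ge0 ?subr_ge0 // ltW.
move=> /eqP; rewrite paddr_eq0 // => /andP[_].
rewrite big_seq_cond psumr_eq0; last first.
  by move=> x /andP[/mem_rem xD _]; rewrite mulr_ge0 // ltW // Pos_dotv //; apply: pD.
move=> /allP fz.
have cz : forall x, x \in rem d D -> c x = 0.
  move=> x xr; have := fz x xr; rewrite xr /= mulf_eq0 => /orP[|].
    rewrite /f mulf_eq0 invr_eq0 (gt_eqF kp) orbF paddr_eq0 // => /andP[/eqP] //.
  by rewrite (gt_eqF (Pos_dotv (pD x (mem_rem xr)))).
have bd' : b = c d *: d.
  rewrite bc (big_rem d dD) /= big1_seq ?addr0 //.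
  by move=> x /andP[_ /cz ->]; rewrite scale0r.
have [c1|c1] := hSpm Sd (eq_ind _ S Sb _ bd').
  by move: bd; rewrite bd' c1 scale1r eqxx.
by move: bp; rewrite bd' c1 scaleN1r dotvNl oppr_gt0 ltNge (ltW dp).
Qed.

Definition allD (D : seq 'rV[R]_n) ws := all (fun x => x \in D) ws.

Lemma allD_S D ws : goodD D -> allD D ws -> allS ws.
Proof. by move=> [_ pD _] /allP h a /h /pD []. Qed.

Lemma conj_simple D b : goodD D -> minD D -> Pos b ->
  exists ws, exists2 d, allD D ws /\ d \in D & b *m prodw ws = d.
Proof.
move=> gD mD Pb; have [uD pD cD] := gD.
pose Reach := [set g | Pos g /\ exists ws, allD D ws /\ g = b *m prodw ws].
have Rfin : finite_set Reach.
  by apply: sub_finite_set hSfin => g [[]].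
have R0 : Reach !=set0 by exists b; split => //; exists [::]; rewrite /= mulmx1.
have [g [Pg [ws [wD gw]]] Hg] := finite_argmax (fun g => - dotv g lam) Rfin R0.
have [c [c0 gc]] := cD g Pg.
have [x xD hx] : exists2 x, x \in D & 0 < c x * dotv x g.
  apply: contrapT => H.
  have : \sum_(x <- D) c x * dotv x g <= 0.
    rewrite big_seq_cond; apply: sumr_le0 => x /andP[xD _].
    by rewrite leNgt; apply/negP => hx; apply: H; exists x.
  rewrite -dot_suml -gc leNgt dotv_gt0 //; exact: hS0 Pg.1.
have xg : 0 < dotv x g.
  move: hx; have [cx|cx] := eqVneq (c x) 0; first by rewrite cx mul0r ltxx.
  by rewrite pmulr_rgt0 // lt_def cx c0.
have [gx|gx] := eqVneq g x; first by exists ws, x; rewrite -?gw ?gx.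

have Pg' := simple_refl gD mD xD Pg gx.
have Rg' : Reach (g *m refl_mx x).
  split => //; exists (ws ++ [:: x]); split.
    by rewrite /allD all_cat -/(allD D ws) wD /= xD.
  by rewrite prodw_cat /= mulmx1 mulmxA gw.
have := Hg _ Rg'; rewrite /= refl_act dotvBl dotvZl opprB.
have xl : 0 < dotv x lam by case: (pD x xD).
have kx : 0 < 2 / dotv x x by rewrite divr_gt0 // dotv_gt0 // hS0 //; case: (pD x xD).
have : 0 < 2 / dotv x x * dotv g x * dotv x lam.
  by apply: mulr_gt0 => //; apply: mulr_gt0 => //; rewrite dotvC.
by move=> h1; rewrite addrC gerDl leNgt h1.
Qed.

Lemma allD_rev D ws : allD D ws -> allD D (rev ws).
Proof. by rewrite /allD all_rev. Qed.

Lemma allD_cat D s t : allD D (s ++ t) = allD D s && allD D t.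
Proof. by rewrite /allD all_cat. Qed.

Lemma refl_W' D b : goodD D -> minD D -> S b ->
  exists ws, allD D ws /\ refl_mx b = prodw ws.
Proof.
move=> gD mD Sb.
wlog Pb : b Sb / Pos b.
  move=> H; have [|nP] := pselect (Pos b); first exact: H.
  by rewrite -refl_opp; apply: H; [apply: SN | apply: notPos].
have [ws [d [wD dD] bd]] := conj_simple gD mD Pb.
have oP := prodw_orth (allD_S gD wD).
exists (ws ++ d :: rev ws); split.
  by rewrite allD_cat wD /= dD allD_rev.
rewrite prodw_cat /= -prodw_tr -bd refl_conj ?hS0 //.
by rewrite !mulmxA oP mul1mx -!mulmxA oP mulmx1.
Qed.

Definition Wp D := [set g | exists ws, allD D ws /\ g = prodw ws].

Lemma W_sub_Wp D : goodD D -> minD D -> W `<=` Wp D.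
Proof.
move=> gD mD; apply: gen_sub.
  split; first by exists [::].
  - move=> x y [s [sD ->]] [t [tD ->]]; exists (s ++ t).
    by rewrite allD_cat sD tD prodw_cat.
  - move=> x [s [sD ->]]; exists (rev s); split; first exact: allD_rev.
    by rewrite orth_inv ?prodw_tr //; apply: prodw_orth; apply: (allD_S gD sD).
by move=> _ [b Sb <-]; apply: refl_W'.
Qed.

Lemma deletion D ws b : goodD D -> minD D -> allD D ws -> Pos b ->
  ~ Pos (b *m prodw ws) ->
  exists p d q, ws = p ++ d :: q /\ b *m prodw p = d.
Proof.
move=> gD mD; elim: ws b => [|a ws IH] b wD Pb nP.
  by move: nP; rewrite /= mulmx1.
move: wD => /= /andP[aD wD].
have [->|ba] := eqVneq b a; first by exists [::], a, ws; rewrite /= mulmx1.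
have Pb' := simple_refl gD mD aD Pb ba.
have [|p [d [q [wq pd]]]] := IH _ wD Pb'; first by rewrite -mulmxA.
by exists (a :: p), d, q; rewrite wq /= mulmxA.
Qed.

Lemma free_words D : goodD D -> minD D -> forall k ws, (size ws <= k)%N ->
  allD D ws -> (forall b, Pos b -> Pos (b *m prodw ws)) -> prodw ws = 1%:M.
Proof.
move=> gD mD; have [uD pD cD] := gD.
elim=> [|k IH] [|a rest] //= sz wD Hw.
move: (wD) => /= /andP[aD rD].
have Pa := pD a aD; have Sa := Pa.1.
have nP : ~ Pos (a *m prodw rest).
  have := Hw a Pa; rewrite mulmxA refl_self ?hS0 // mulNmx.
  by move=> /Pos_neg h [_ h']; move: h; rewrite ltNge (ltW h').
have [p [d [q [rq ad]]]] := deletion gD mD rD Pa nP.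
have pD' : allD D p /\ allD D q /\ d \in D.
  by move: rD; rewrite rq allD_cat /= => /and3P[].
have oP := prodw_orth (allD_S gD (proj1 pD')).
have conj : refl_mx a *m prodw p = prodw p *m refl_mx d.
  by rewrite -ad refl_conj ?hS0 // !mulmxA oP mul1mx.
have eq : refl_mx a *m prodw rest = prodw (p ++ q).
  rewrite rq !prodw_cat /= mulmxA conj -mulmxA (mulmxA (refl_mx d)).
  by rewrite refl_invol ?hS0 ?mul1mx //; case: (pD d (proj2 (proj2 pD'))).
rewrite eq; apply: IH.
- by move: sz; rewrite rq !size_cat /=; lia.
- by rewrite allD_cat (proj1 pD') (proj1 (proj2 pD')).
- by move=> b /Hw; rewrite eq.
Qed.

Lemma free_chamber w : W w ->
  (forall a, S a -> (0 < dotv a (lam *m w)) = (0 < dotv a lam)) -> w = 1%:M.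
Proof.
move=> Ww Hw; have [D [gD mD]] := exists_min.
have WT := W_T Ww.
have [ws [wD wT]] := W_sub_Wp gD mD WT.
suff h : prodw ws = 1%:M by rewrite -[w]trmxK wT h trmx1.
apply: (free_words gD mD (leqnn _) wD) => b [Sb bp].
rewrite -wT; split; first exact: W_ST.
by rewrite dotv_mulmx trmxK Hw.
Qed.

End Coxeter.
Section Regular.
Variables (R : realType) (n : nat) (S U : set 'rV[R]_n).
Hypothesis hS0 : forall a, S a -> a != 0.
Hypothesis hSfin : finite_set S.
Hypothesis hSU : S `<=` U.
Hypothesis hU : forall u v c, U u -> U v -> U (u + c *: v).
Hypothesis hU0 : U 0.

Lemma regular_seq (s : seq 'rV[R]_n) : (forall a, a \in s -> S a) ->
  exists x, U x /\ forall a, a \in s -> dotv a x != 0.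
Proof.
elim: s => [|a s IH] hs; first by exists 0.
have [x [Ux hx]] : exists x, U x /\ forall b, b \in s -> dotv b x != 0.
  by apply: IH => b bs; apply: hs; rewrite inE bs orbT.
have Sa : S a by apply: hs; rewrite inE eqxx.
have [ax|ax] := eqVneq (dotv a x) 0; last first.
  by exists x; split => // b; rewrite inE => /orP[/eqP->//|/hx].
pose r b := `|dotv b a| / `|dotv b x|.
pose K := 1 + \sum_(b <- s) r b.
have r0 b : 0 <= r b by rewrite divr_ge0.
have K0 : 0 < K by rewrite ltr_pwDl // sumr_ge0.
have rK b : b \in s -> r b < K.
  move=> bs; rewrite /K (big_rem b bs) /= addrCA ltrDl.
  by rewrite ltr_pwDl // sumr_ge0.
exists (x + K^-1 *: a); split; first by apply: hU => //; apply: hSU.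
move=> b; rewrite inE => /orP[/eqP->|bs].
  rewrite dotvDr ax add0r dotvZr mulf_neq0 //; first by rewrite invr_eq0 gt_eqF.
  by rewrite dotv_eq0 hS0.
rewrite dotvDr dotvZr; apply/eqP => h.
have bx := hx b bs.
have : `|dotv b x| = `|K^-1 * dotv b a|.
  have -> : dotv b x = - (K^-1 * dotv b a) by apply/eqP; rewrite -addr_eq0 h.
  by rewrite normrN.
rewrite normrM gtr0_norm ?invr_gt0 // => e.
have := rK b bs; rewrite /r ltr_pdivrMr ?normr_gt0 // -ltr_pdivrMl // e.
by rewrite ltxx.
Qed.

Lemma regular_exists : exists x, U x /\ forall a, S a -> dotv a x != 0.
Proof.
have [s Ss] := (finite_seqP S).1 hSfin.
have [x [Ux hx]] : exists x, U x /\ forall a, a \in s -> dotv a x != 0.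
  by apply: regular_seq => a; rewrite Ss.
by exists x; split => // a; rewrite Ss; apply: hx.
Qed.
End Regular.
Section Chambers.
Variables (R : realType) (n : nat) (S U : set 'rV[R]_n).
Hypothesis hS0 : forall a, S a -> a != 0.
Hypothesis hSpm : forall a c, S a -> S (c *: a) -> c = 1 \/ c = -1.
Hypothesis hSrefl : forall a b, S a -> S b -> S (b *m refl_mx a).
Hypothesis hSfin : finite_set S.
Hypothesis hSU : S `<=` U.
Hypothesis hU : forall u v c, U u -> U v -> U (u + c *: v).
Hypothesis hU0 : U 0.
Hypothesis hWfin : finite_set (gen_group (refl_mx @` S)).
Implicit Types (a b x : 'rV[R]_n) (w : 'M[R]_n).

Definition regular x := forall a, S a -> dotv a x != 0.
Definition samepat x y := forall a, S a -> (0 < dotv a x) = (0 < dotv a y).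

Lemma chambers : exists lam, [/\ U lam, regular lam,
  (forall w, gen_group (refl_mx @` S) w -> U (lam *m w) /\ regular (lam *m w)),
  (forall w w', gen_group (refl_mx @` S) w -> gen_group (refl_mx @` S) w' ->
      samepat (lam *m w) (lam *m w') -> w = w')
  & (forall x, U x -> regular x ->
      exists2 w, gen_group (refl_mx @` S) w & samepat (lam *m w) x)].
Proof.
have [lam [Ul rl]] := regular_exists hS0 hSfin hSU hU hU0.
have WH : forall w, gen_group (refl_mx @` S) w -> Hset S U w := gen_Hset hS0 hSrefl hSU hU.
have dm : forall a v w, dotv a (v *m w^T) = dotv (a *m w) v.
  by move=> a v w; rewrite dotvC dotv_mulmx trmxK dotvC.
exists lam; split => //.
- move=> w Ww; have [ow hS hUw] := WH w Ww; split; first exact: (hUw _ Ul).1.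
  by move=> a Sa; rewrite -[w]trmxK dm; apply: rl; apply: (hS a Sa).2.
- move=> w w' Ww Ww' hp.
  have [ow hSw _] := WH w Ww.
  have Wu : gen_group (refl_mx @` S) (w' *m w^T).
    by apply: (gen_M Ww'); apply: (W_T hS0 hSrefl hSU hU Ww).
  have := free_chamber hS0 hSpm hSrefl hSfin hSU hU rl Wu.
  have key : forall a, S a ->
      (0 < dotv a (lam *m (w' *m w^T))) = (0 < dotv a lam).
    move=> a Sa; rewrite mulmxA dm -hp; last exact: (hSw a Sa).1.
    by rewrite orth_dot.
  move=> /(_ key) e.
  by rewrite -[w']mulmx1 -(orthC ow) mulmxA e mul1mx.
- move=> x Ux rx.
  have [w Ww hw] := trans_chamber hS0 hSrefl hSU hU rl hWfin Ux rx.
  have [ow hSw _] := WH w Ww.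
  exists w^T; first exact: (W_T hS0 hSrefl hSU hU).
  move=> a Sa; rewrite dm -hw; last exact: (hSw a Sa).1.
  by rewrite orth_dot.
Qed.
End Chambers.
Lemma eqN_eq0 (R : realType) (x : R) : x = - x -> x = 0.
Proof. lra. Qed.

Lemma vecN_eq0 (R : realType) n (v : 'rV[R]_n) : v = - v -> v = 0.
Proof.
move=> h; have : 2%:R *: v = 0 by rewrite scaler_nat mulr2n {1}h addNr.
by move/eqP; rewrite scaler_eq0 pnatr_eq0 /= => /eqP.
Qed.

Section Split.
Variables (R : realType) (n : nat) (Rt Ea Eb : set 'rV[R]_n).
Hypothesis hEbZ : forall c v, Eb v -> Eb (c *: v).
Hypothesis hEab : forall v, Ea v -> Eb v -> v = 0.
Hypothesis hOrth : forall u v, Ea u -> Eb v -> dotv u v = 0.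
Hypothesis hDec : forall a, exists a1 a2, [/\ Ea a1, Eb a2 & a = a1 + a2].

Lemma split_lemma a p y x : Rt a -> is_orth_proj Ea a p ->
  proportional_to_root ((Rt `&` Ea) `|` (Rt `&` Eb)) p ->
  Ea y -> Eb x ->
  (forall b, Rt b -> Ea b -> dotv b y != 0) ->
  (forall b, Rt b -> Eb b -> dotv b x != 0) ->
  ~ (dotv a x = 0 /\ dotv a y = 0).
Proof.
move=> Ra [Ep pperp] [c [b [Bb pb]]] Ey Ex hy hx [ax ay].
have ap : dotv a y = dotv p y.
  by apply/eqP; rewrite -subr_eq0 -dotvBl pperp.
have p0 : p = 0.
  case: Bb => [[Rb Eab]|[Rb Ebb]].
    have [c0|c0] := eqVneq c 0; first by rewrite pb c0 scale0r.
    by move: ay; rewrite ap pb dotvZl => /eqP; rewrite mulf_eq0 (negPf c0) /= (negPf (hy b Rb Eab)).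
  by apply: hEab => //; rewrite pb; apply: hEbZ.
have [a1 [a2 [E1 E2 aa]]] := hDec a.
have : dotv a a1 = 0 by rewrite -[a]subr0 -p0 pperp.
rewrite aa dotvDl (dotvC a2) (hOrth E1 E2) addr0 => /eqP; rewrite dotv_eq0 => /eqP a10.
move: aa; rewrite a10 add0r => aa.
by move: ax; apply/eqP; rewrite aa; apply: hx => //; rewrite -aa.
Qed.
End Split.
Section Topo.
Variables (R : realType) (n : nat).
Local Notation T := ('rV[R]_n * 'rV[R]_n)%type.
Implicit Types (z c : T).

Lemma dot_cont (a : 'rV[R]_n) : continuous (fun v : 'rV[R]_n => dotv a v).
Proof.
have -> : (fun v : 'rV[R]_n => dotv a v) =
    (fun v => \sum_(i <- index_enum 'I_n | true) a 0 i * v 0 i).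
  by apply: funext => v; rewrite /dotv mxE; apply: eq_bigr => i _; rewrite mxE.
apply: (@continuous_big _ _ +%R 0 xpredT (@add_continuous _)) => i _.
move=> v; apply: (@continuousM _ _ (fun=> a 0 i) (fun v : 'rV[R]_n => v 0 i)).
  exact: cst_continuous.
exact: coord_continuous.
Qed.

Lemma fst_comp_cont (X : topologicalType) (f : 'rV[R]_n -> X) :
  continuous f -> continuous (fun z : T => f z.1).
Proof.
move=> cf z; have h : {for z, continuous (fst : T -> 'rV[R]_n)} by exact: cvg_fst.
exact: (continuous_comp h (cf _)).
Qed.

Lemma snd_comp_cont (X : topologicalType) (f : 'rV[R]_n -> X) :
  continuous f -> continuous (fun z : T => f z.2).
Proof.
move=> cf z; have h : {for z, continuous (snd : T -> 'rV[R]_n)} by exact: cvg_snd.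
exact: (continuous_comp h (cf _)).
Qed.

Lemma dot1_cont (a : 'rV[R]_n) : continuous (fun z : T => dotv a z.1).
Proof.
by apply: (@fst_comp_cont _ (dotv a)); apply: dot_cont.
Qed.

Lemma dot2_cont (a : 'rV[R]_n) : continuous (fun z : T => dotv a z.2).
Proof.
by apply: (@snd_comp_cont _ (dotv a)); apply: dot_cont.
Qed.

Definition seg z c (t : R) : T :=
  ((1 - t) *: z.1 + t *: c.1, (1 - t) *: z.2 + t *: c.2).

Lemma pair_cont (X Y Z : topologicalType) (f : X -> Y) (g : X -> Z) :
  continuous f -> continuous g -> continuous (fun x => (f x, g x)).
Proof. by move=> cf cg x; apply: cvg_pair; [exact: cf | exact: cg]. Qed.

Lemma segc_cont (d : 'rV[R]_n) (pr : T -> 'rV[R]_n) : continuous pr ->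
  continuous (fun p : R * T => (1 - p.1) *: pr p.2 + p.1 *: d).
Proof.
move=> cpr p.
have c1 : continuous (fun p : R * T => p.1) by move=> q; exact: cvg_fst.
have c2 : continuous (fun p : R * T => p.2) by move=> q; exact: cvg_snd.
have h1 : {for p, continuous (fun p : R * T => 1 - p.1)}.
  have := @continuousD R R^o _ (fun=> 1) (fun p : R * T => - p.1) p
    (@cst_continuous _ _ _ _) (@continuousN _ _ _ (fun p : R * T => p.1) p (c1 p)).
  exact.
have h2 : {for p, continuous (fun p : R * T => pr p.2)}.
  have h2 : {for p, continuous (fun p : R * T => p.2)} by exact: c2.
  exact: (continuous_comp h2 (cpr _)).
have h3 := @continuousZ _ _ _ _ _ p h1 h2.
have h4 := @continuousZ _ _ _ (fun p : R * T => p.1) (fun=> d) p (c1 p)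
  (@cst_continuous _ _ _ _).
have := continuousD h3 h4.
exact.
Qed.

Lemma seg_cont c : continuous (fun p : R * T => seg p.2 c p.1).
Proof.
apply: pair_cont; apply: segc_cont.
  by move=> z; exact: cvg_fst.
by move=> z; exact: cvg_snd.
Qed.

Lemma seg0 z c : seg z c 0 = z.
Proof. by case: z => x y; rewrite /seg /= subr0 !scale1r !scale0r !addr0. Qed.

Lemma seg1 z c : seg z c 1 = c.
Proof. by case: c => x y; rewrite /seg /= subrr !scale1r !scale0r !add0r. Qed.

Lemma segt_cont z c : continuous (fun t : R => seg z c t).
Proof.
have cp : continuous (fun t : R => (t, z)).
  apply: pair_cont; first by move=> t.
  by move=> t; apply: cst_continuous.
move=> t; have := continuous_comp (cp t) (@seg_cont c (t, z)); exact.
Qed.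

Lemma star_connected (K : set T) z0 : K z0 ->
  (forall z, K z -> forall t, 0 <= t <= 1 -> K (seg z z0 t)) -> connected K.
Proof.
move=> Kz0 hK.
have -> : K = \bigcup_(z in K) ((fun t => seg z z0 t) @` `[0, 1]%classic).
  apply/seteqP; split.
    by move=> z Kz; exists z => //; exists 0; rewrite ?seg0 //= in_itv /= lexx ler01.
  by move=> _ [z Kz [t t01 <-]]; apply: hK; move: t01; rewrite /= in_itv.
apply: bigcup_connected.
  by exists z0 => z Kz; exists 1; rewrite ?seg1 //= in_itv /= lexx ler01.
move=> z Kz; apply: connected_continuous_connected.
  exact: segment_connected.
apply: continuous_subspaceT; exact: segt_cont.
Qed.

Lemma convex_contractible (K : set T) :
  K !=set0 -> (forall x y t, K x -> K y -> 0 <= t <= 1 -> K (seg x y t)) ->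
  contractible R K.
Proof.
move=> [z0 Kz0] hK; split; first by exists z0.
exists z0, (fun p : R * T => seg p.2 z0 p.1); split.
- by apply: continuous_subspaceT; exact: seg_cont.
- by move=> x Kx; rewrite /= seg0 seg1.
- by move=> t x t01 Kx; apply: hK.
Qed.

Lemma open_pos_seq (sq : seq 'rV[R]_n) (f : 'rV[R]_n -> T -> R) :
  (forall a, continuous (f a)) ->
  open [set z | forall a, a \in sq -> 0 < f a z].
Proof.
move=> cf; elim: sq => [|a sq IH].
  have -> : [set z : T | forall a, a \in [::] -> 0 < f a z] = setT by
    apply/seteqP; split => // z _ a; rewrite in_nil.
  exact: openT.
have -> : [set z | forall b, b \in a :: sq -> 0 < f b z] =
    (f a @^-1` [set x | 0 < x]) `&` [set z | forall b, b \in sq -> 0 < f b z].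
  apply/seteqP; split.
    move=> z h; split; first by apply: h; rewrite inE eqxx.
    by move=> b bs; apply: h; rewrite inE bs orbT.
  by move=> z [h1 h2] b; rewrite inE => /orP[/eqP->//|/h2].
apply: openI => //; apply: open_comp; last exact: open_gt.
by move=> z _; apply: cf.
Qed.

Lemma closed_nneg_seq (sq : seq 'rV[R]_n) (f : 'rV[R]_n -> T -> R) :
  (forall a, continuous (f a)) ->
  closed [set z | forall a, a \in sq -> 0 <= f a z].
Proof.
move=> cf; elim: sq => [|a sq IH].
  have -> : [set z : T | forall a, a \in [::] -> 0 <= f a z] = setT by
    apply/seteqP; split => // z _ a; rewrite in_nil.
  exact: closedT.
have -> : [set z | forall b, b \in a :: sq -> 0 <= f b z] =
    (f a @^-1` [set x | 0 <= x]) `&` [set z | forall b, b \in sq -> 0 <= f b z].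
  apply/seteqP; split.
    move=> z h; split; first by apply: h; rewrite inE eqxx.
    by move=> b bs; apply: h; rewrite inE bs orbT.
  by move=> z [h1 h2] b; rewrite inE => /orP[/eqP->//|/h2].
apply: closedI => //; apply: preimage_closed; last exact: closed_ge.
by move=> z _; apply: cf.
Qed.

End Topo.
Section RealFacts.
Variable R : realType.
Implicit Types (t p q r : R).

Lemma comb_pos t p q : 0 <= t -> t <= 1 -> 0 < p -> 0 < q -> 0 < (1 - t) * p + t * q.
Proof. move=> *; nra. Qed.

Lemma comb_neg t p q : 0 <= t -> t <= 1 -> p < 0 -> q < 0 -> (1 - t) * p + t * q < 0.
Proof. move=> *; nra. Qed.

Lemma neq0_neg p : p != 0 -> ~~ (0 < p) -> p < 0.
Proof. by move=> p0; rewrite -leNgt le_eqVlt (negPf p0). Qed.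

Lemma comb_same t p q r : 0 <= t -> t <= 1 -> p != 0 -> q != 0 ->
  (0 < p) = (0 < r) -> (0 < q) = (0 < r) ->
  ((1 - t) * p + t * q != 0) /\ ((0 < (1 - t) * p + t * q) = (0 < r)).
Proof.
move=> t0 t1 p0 q0 pr qr; case: (boolP (0 < r)) => rp.
  have := @comb_pos t p q t0 t1 (etrans pr rp) (etrans qr rp).
  by move=> h; rewrite h gt_eqF.
have pn : p < 0 by apply: neq0_neg => //; rewrite pr.
have qn : q < 0 by apply: neq0_neg => //; rewrite qr.
have := comb_neg t0 t1 pn qn.
by move=> h; rewrite lt_eqF //; split => //; rewrite ltNge (ltW h).
Qed.

Lemma same_prod p q : p != 0 -> q != 0 -> (0 < p) = (0 < q) -> 0 < p * q.
Proof.
move=> p0 q0; case: (boolP (0 < p)) => pp.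
  by move=> /esym qp; rewrite mulr_gt0.
move=> /esym /negbT qn; rewrite nmulr_rgt0 ?neq0_neg //.
Qed.

Lemma prod_same p q : 0 < p * q -> (0 < p) = (0 < q).
Proof.
move=> h; apply: sgn_same (ltW h).
  by apply: contraTneq h => ->; rewrite mul0r ltxx.
by apply: contraTneq h => ->; rewrite mulr0 ltxx.
Qed.

Lemma nneg_prod p q : p != 0 -> q != 0 -> 0 <= p * q -> 0 < p * q.
Proof. by move=> p0 q0 h; rewrite lt_def mulf_neq0. Qed.
End RealFacts.
Section Main.
Variables (R : realType) (n : nat) (Rt : set 'rV[R]_n) (G : set 'M[R]_n)
  (s : 'M[R]_n).
Hypothesis hRt : root_system Rt.
Hypothesis hG : G = gen_group (refl_mx @` Rt).
Hypothesis hGfin : finite_set G.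
Hypothesis hs : special_involution Rt G s.
Implicit Types (a b u v x y : 'rV[R]_n).

Let V1 := minus_eigsp s.
Let V2 := plus_eigsp s.

Lemma Rt0 a : Rt a -> a != 0.
Proof. by case: hRt => _ h _ _; apply: h. Qed.
Lemma Rtfin : finite_set Rt.
Proof. by case: hRt. Qed.
Lemma Rtrefl a b : Rt a -> Rt b -> Rt (b *m refl_mx a).
Proof. by case: hRt => _ _ _ h; apply: h. Qed.
Lemma Rtpm a c : Rt a -> Rt (c *: a) -> c = 1 \/ c = -1.
Proof. by case: hRt => _ _ h _ Ra /(h a c Ra). Qed.

Lemma s_orth : orth s.
Proof.
case: hs => Gs _ _; move: Gs; rewrite hG.
have hU : forall u v (c : R), [set: 'rV[R]_n] u -> [set: 'rV[R]_n] v ->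
    [set: 'rV[R]_n] (u + c *: v) by [].
by move=> /(gen_Hset Rt0 Rtrefl (subsetT Rt) hU) [].
Qed.

Lemma s_ss : s *m s = 1%:M.
Proof. by case: hs. Qed.

Lemma s_sym : s^T = s.
Proof. by rewrite -[s^T]mulmx1 -s_ss mulmxA (orthC s_orth) mul1mx. Qed.

Lemma V1_sub u v c : V1 u -> V1 v -> V1 (u + c *: v).
Proof.
rewrite /V1 /minus_eigsp /= => hu hv.
by rewrite mulmxDl -scalemxAl hu hv scalerN opprD.
Qed.
Lemma V2_sub u v c : V2 u -> V2 v -> V2 (u + c *: v).
Proof.
rewrite /V2 /plus_eigsp /= => hu hv.
by rewrite mulmxDl -scalemxAl hu hv.
Qed.
Lemma V1_0 : V1 0. Proof. by rewrite /V1 /minus_eigsp /= mul0mx oppr0. Qed.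
Lemma V2_0 : V2 0. Proof. by rewrite /V2 /plus_eigsp /= mul0mx. Qed.
Lemma V1_Z c v : V1 v -> V1 (c *: v).
Proof. by move=> h; rewrite -[_ *: _]add0r; apply: V1_sub => //; apply: V1_0. Qed.
Lemma V2_Z c v : V2 v -> V2 (c *: v).
Proof. by move=> h; rewrite -[_ *: _]add0r; apply: V2_sub => //; apply: V2_0. Qed.

Lemma V12_orth x y : V2 x -> V1 y -> dotv x y = 0.
Proof.
move=> hx hy; apply: eqN_eq0; rewrite -{1}(orth_dot x y s_orth).
have -> : x *m s = x := hx.
have -> : y *m s = - y := hy.
by rewrite dotvNr.
Qed.

Lemma V12_0 v : V1 v -> V2 v -> v = 0.
Proof.
move=> h1 h2; apply: vecN_eq0.
have e1 : v *m s = - v := h1.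
have e2 : v *m s = v := h2.
by rewrite -{1}e2 e1.
Qed.

Lemma V_dec a : exists a1 a2, [/\ V1 a1, V2 a2 & a = a1 + a2].
Proof.
exists (2^-1 *: (a - a *m s)), (2^-1 *: (a + a *m s)); split.
- apply: V1_Z; rewrite /V1 /minus_eigsp /= mulmxBl -mulmxA s_ss mulmx1 opprB //.
- apply: V2_Z; rewrite /V2 /plus_eigsp /= mulmxDl -mulmxA s_ss mulmx1 addrC //.
- rewrite -scalerDr (addrC a (a *m s)) addrA subrK -mulr2n -(scaler_nat 2 a) scalerA mulVf ?scale1r //.
Qed.

Lemma F_char z : fixed_set Rt s z <->
  [/\ V2 z.1, V1 z.2, (forall a, Rt a -> V2 a -> dotv a z.1 != 0)
    & (forall b, Rt b -> V1 b -> dotv b z.2 != 0)].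
Proof.
split.
- case: z => x y [hc /= [ex ey]].
  have Ey : V1 y by rewrite /V1 /minus_eigsp /= -{2}ey opprK.
  split => //.
  + move=> a Ra Ea; apply/eqP => ax; apply: (hc a Ra); split => //.
    by apply: V12_orth.
  + move=> b Rb Eb; apply/eqP => bx; apply: (hc b Rb); split => //.
    by rewrite dotvC; apply: V12_orth.
case: z => x y [/= Ex Ey hx hy]; split; last first.
  by rewrite /= Ex; congr (_, _); rewrite Ey opprK.
have o21 : forall u v, V1 u -> V2 v -> dotv u v = 0.
  by move=> u v h1 h2; rewrite dotvC; apply: V12_orth.
have d21 : forall a, exists a1 a2, [/\ V2 a1, V1 a2 & a = a1 + a2].
  by move=> a1; have [u [v [h1 h2 ->]]] := V_dec a1; exists v, u; rewrite addrC.
have V21_0 : forall v, V2 v -> V1 v -> v = 0 by move=> v h1 h2; apply: V12_0.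
move=> a Ra /=; case: hs => _ _ /(_ a Ra) [[p [pp pr]]|[p [pp pr]]].
- exact: (@split_lemma R n Rt V1 V2 V2_Z V12_0 o21 V_dec a p y x Ra pp pr Ey Ex
    (fun b Rb Eb => hy b Rb Eb) (fun b Rb Eb => hx b Rb Eb)).
- move=> [ax ay].
  apply: (@split_lemma R n Rt V2 V1 V1_Z V21_0 V12_orth d21 a p x y Ra pp _ Ex Ey
    (fun b Rb Eb => hx b Rb Eb) (fun b Rb Eb => hy b Rb Eb)).
    by rewrite setUC.
  by split.
Qed.

Let R1 := Rt `&` V1.
Let R2 := Rt `&` V2.
Local Notation T := ('rV[R]_n * 'rV[R]_n)%type.
Let F := fixed_set Rt s.

Lemma chambersE (E : set 'rV[R]_n) :
  (forall u v c, E u -> E v -> E (u + c *: v)) -> E 0 ->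
  exists lam, [/\ E lam, regular (Rt `&` E) lam,
  (forall w, gen_group (refl_mx @` (Rt `&` E)) w ->
      E (lam *m w) /\ regular (Rt `&` E) (lam *m w)),
  (forall w w', gen_group (refl_mx @` (Rt `&` E)) w ->
      gen_group (refl_mx @` (Rt `&` E)) w' ->
      samepat (Rt `&` E) (lam *m w) (lam *m w') -> w = w')
  & (forall x, E x -> regular (Rt `&` E) x ->
      exists2 w, gen_group (refl_mx @` (Rt `&` E)) w &
        samepat (Rt `&` E) (lam *m w) x)].
Proof.
move=> hE hE0.
have h0 : forall a, (Rt `&` E) a -> a != 0 by move=> a [Ra _]; apply: Rt0.
have hpm : forall a c, (Rt `&` E) a -> (Rt `&` E) (c *: a) -> c = 1 \/ c = -1.
  by move=> a c [Ra _] [Rca _]; exact: (Rtpm Ra Rca).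
have hrefl : forall a b, (Rt `&` E) a -> (Rt `&` E) b -> (Rt `&` E) (b *m refl_mx a).
  move=> a b [Ra Ea] [Rb Eb]; rewrite /setI /=; split; first exact: Rtrefl.
  by rewrite refl_act -scaleNr; apply: hE.
have hfin : finite_set (Rt `&` E) by exact: sub_finite_set (@subIsetl _ Rt E) Rtfin.
have hSU : (Rt `&` E) `<=` E by move=> a [].
have hW : finite_set (gen_group (refl_mx @` (Rt `&` E))).
  apply: sub_finite_set hGfin; rewrite hG; apply: gen_sub; first exact: gen_grp.
  by move=> _ [a [Ra _] <-]; apply: gen_gens; exists a.
exact: (chambers h0 hpm hrefl hfin hSU hE hE0 hW).
Qed.

Definition cls (z : T) : set T :=
  [set z' | F z' /\ samepat R2 z'.1 z.1 /\ samepat R1 z'.2 z.2].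

Lemma F_reg2 z : F z -> regular R2 z.1.
Proof. by move=> /F_char [_ _ h _] a [Ra Ea]; apply: h. Qed.
Lemma F_reg1 z : F z -> regular R1 z.2.
Proof. by move=> /F_char [_ _ _ h] a [Ra Ea]; apply: h. Qed.

Lemma cls_refl z : F z -> cls z z.
Proof. by move=> Fz; split. Qed.

Lemma cls_eq z z' : cls z z' -> cls z' = cls z.
Proof.
move=> [Fz' [h2 h1]]; apply/seteqP; split.
  move=> y [Fy [g2 g1]]; split => //; split => a Ra.
    by rewrite g2 // h2.
  by rewrite g1 // h1.
move=> y [Fy [g2 g1]]; split => //; split => a Ra.
  by rewrite g2 // h2.
by rewrite g1 // h1.
Qed.

Lemma V2_comb x y c d : V2 x -> V2 y -> V2 (c *: x + d *: y).
Proof. by move=> hx hy; apply: V2_sub => //; apply: V2_Z. Qed.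
Lemma V1_comb x y c d : V1 x -> V1 y -> V1 (c *: x + d *: y).
Proof. by move=> hx hy; apply: V1_sub => //; apply: V1_Z. Qed.

Lemma cls_convex z (x y : T) (t : R) : cls z x -> cls z y -> 0 <= t <= 1 -> cls z (seg x y t).
Proof.
move=> [Fx [x2 x1]] [Fy [y2 y1]] /andP[t0 t1].
have [Ex1 Ex2 _ _] := (F_char x).1 Fx.
have [Ey1 Ey2 _ _] := (F_char y).1 Fy.
have c2 : forall a, R2 a -> (dotv a (seg x y t).1 != 0) /\
    ((0 < dotv a (seg x y t).1) = (0 < dotv a z.1)).
  move=> a Ra; rewrite /seg /= dotvDr !dotvZr.
  by apply: comb_same => //; [apply: F_reg2 | apply: F_reg2 | apply: x2 | apply: y2].
have c1 : forall a, R1 a -> (dotv a (seg x y t).2 != 0) /\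
    ((0 < dotv a (seg x y t).2) = (0 < dotv a z.2)).
  move=> a Ra; rewrite /seg /= dotvDr !dotvZr.
  by apply: comb_same => //; [apply: F_reg1 | apply: F_reg1 | apply: x1 | apply: y1].
split; last by split => a Ra; [apply: (c2 a Ra).2 | apply: (c1 a Ra).2].
apply/F_char; split.
- exact: V2_comb.
- exact: V1_comb.
- by move=> a Ra Ea; apply: (c2 a (conj Ra Ea)).1.
- by move=> a Ra Ea; apply: (c1 a (conj Ra Ea)).1.
Qed.

Lemma cls_connected z : F z -> connected (cls z).
Proof.
move=> Fz; apply: (star_connected (cls_refl Fz)) => x' cx t t01.
exact: cls_convex cx (cls_refl Fz) t01.
Qed.

Lemma cls_sub z : cls z `<=` F.
Proof. by move=> y []. Qed.

Lemma cmul_cont (c : R) (g : T -> R) : continuous g -> continuous (fun p : T => c * g p).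
Proof.
move=> cg p; have := @continuousM _ _ (fun=> c) g p (@cst_continuous _ _ _ _) (cg p).
exact.
Qed.

Lemma fin_R2 : finite_set R2.
Proof. exact: sub_finite_set (@subIsetl _ Rt V2) Rtfin. Qed.
Lemma fin_R1 : finite_set R1.
Proof. exact: sub_finite_set (@subIsetl _ Rt V1) Rtfin. Qed.

Lemma cls_comp z : F z -> connected_component F z = cls z.
Proof.
move=> Fz; apply/seteqP; split; last first.
  exact: connected_component_max (cls_refl Fz) (@cls_sub z) (cls_connected Fz).
pose K := connected_component F z.
have cK : connected K by apply: component_connected.
have KF : K `<=` F by apply: connected_component_sub.
have Kz : K z by apply: connected_component_refl.
have [s2 e2] := (finite_seqP R2).1 fin_R2.
have [s1 e1] := (finite_seqP R1).1 fin_R1.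
pose O := [set y : T | forall a, a \in s2 -> 0 < dotv a z.1 * dotv a y.1] `&`
          [set y : T | forall a, a \in s1 -> 0 < dotv a z.2 * dotv a y.2].
pose C := [set y : T | forall a, a \in s2 -> 0 <= dotv a z.1 * dotv a y.1] `&`
          [set y : T | forall a, a \in s1 -> 0 <= dotv a z.2 * dotv a y.2].
have r2 : forall a, a \in s2 -> R2 a by move=> a; rewrite e2.
have r1 : forall a, a \in s1 -> R1 a by move=> a; rewrite e1.
have clsO : forall p, F p -> cls z p <-> O p.
  move=> p Fp; split.
    move=> [_ [h2 h1]]; split => a ha.
      have Ra := r2 a ha; apply: same_prod.
      - exact: (F_reg2 Fz Ra).
      - exact: (F_reg2 Fp Ra).
      - by rewrite h2.
    have Ra := r1 a ha; apply: same_prod.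
    - exact: (F_reg1 Fz Ra).
    - exact: (F_reg1 Fp Ra).
    - by rewrite h1.
  move=> [h2 h1]; split => //; split => a Ra.
    have ha : a \in s2 by move: Ra; rewrite e2.
    by rewrite (prod_same (h2 a ha)).
  have ha : a \in s1 by move: Ra; rewrite e1.
  by rewrite (prod_same (h1 a ha)).
have OC : forall p, F p -> O p <-> C p.
  move=> p Fp; split.
    by move=> [h2 h1]; split => a ha; [apply: ltW; apply: h2 | apply: ltW; apply: h1].
  move=> [h2 h1]; split => a ha.
    apply: nneg_prod; last exact: h2.
      exact: (F_reg2 Fz (r2 a ha)).
    exact: (F_reg2 Fp (r2 a ha)).
  apply: nneg_prod; last exact: h1.
    exact: (F_reg1 Fz (r1 a ha)).
  exact: (F_reg1 Fp (r1 a ha)).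
have KO : K `&` cls z = K `&` O.
  apply/seteqP; split => p [Kp h]; split => //; by apply/clsO => //; apply: KF.
have KC : K `&` cls z = K `&` C.
  apply/seteqP; split => p [Kp h]; split => //.
    by apply/OC; [apply: KF | apply/clsO => //; apply: KF].
  by apply/clsO; [apply: KF | apply/OC => //; apply: KF].
have := cK (K `&` cls z).
have ne : (K `&` cls z) !=set0 by exists z; split => //; apply: cls_refl.
have oO : open O.
  apply: openI; apply: open_pos_seq => a; apply: cmul_cont.
    exact: dot1_cont.
  exact: dot2_cont.
have cC : closed C.
  apply: closedI; apply: closed_nneg_seq => a; apply: cmul_cont.
    exact: dot1_cont.
  exact: dot2_cont.
move=> /(_ ne (ex_intro2 _ _ O oO KO) (ex_intro2 _ _ C cC KC)) eq p Kp.
have : (K `&` cls z) p by rewrite eq.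
by case.
Qed.
Lemma main_result :
  (forall C, components F C -> contractible R C) /\
  (components F #= (gen_group (refl_mx @` (Rt `&` minus_eigsp s))) `*`
                   (gen_group (refl_mx @` (Rt `&` plus_eigsp s))))%card.
Proof.
split.
  move=> _ [z Fz ->]; rewrite cls_comp //.
  apply: convex_contractible; first by exists z; apply: cls_refl.
  by move=> x' y' t cx cy t01; apply: cls_convex.
have [l2 [U2 reg2 act2 inj2 surj2]] := chambersE V2_sub V2_0.
have [l1 [U1 reg1 act1 inj1 surj1]] := chambersE V1_sub V1_0.
have Fpt : forall g1 g2, gen_group (refl_mx @` (Rt `&` V1)) g1 ->
    gen_group (refl_mx @` (Rt `&` V2)) g2 -> F (l2 *m g2, l1 *m g1).
  move=> g1 g2 Gg1 Gg2; apply/F_char; split => /=.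
  - exact: (act2 g2 Gg2).1.
  - exact: (act1 g1 Gg1).1.
  - by move=> a Ra Ea; apply: (act2 g2 Gg2).2; split.
  - by move=> a Ra Ea; apply: (act1 g1 Gg1).2; split.
rewrite card_eq_sym; apply/card_set_bijP.
exists (fun g : 'M[R]_n * 'M[R]_n => cls (l2 *m g.2, l1 *m g.1)); split.
- move=> [g1 g2] [/= Gg1 Gg2]; exists (l2 *m g2, l1 *m g1); first exact: Fpt.
  by rewrite cls_comp //; apply: Fpt.
- move=> [g1 g2] [g1' g2']; rewrite !in_setE => -[/= Gg1 Gg2] [/= Gg1' Gg2'] /= eq.
  have : cls (l2 *m g2, l1 *m g1) (l2 *m g2', l1 *m g1').
    by rewrite eq; apply: cls_refl; apply: Fpt.
  move=> [_ [/= p2 p1]].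
  by rewrite (inj2 _ _ Gg2' Gg2 p2) (inj1 _ _ Gg1' Gg1 p1).
- move=> _ [z Fz ->]; rewrite cls_comp //.
  have [Ez1 Ez2 rz2 rz1] := (F_char z).1 Fz.
  have [g2 Gg2 p2] := surj2 z.1 Ez1 (fun a (Ra : R2 a) => rz2 a Ra.1 Ra.2).
  have [g1 Gg1 p1] := surj1 z.2 Ez2 (fun a (Ra : R1 a) => rz1 a Ra.1 Ra.2).
  exists (g1, g2) => //=.
  by apply: cls_eq; split; [apply: Fpt | split].
Qed.
End Main.

Unset Implicit Arguments.

Theorem proposition8 (R : realType) (n : nat) (Rt : set 'rV[R]_n)
    (G : set 'M[R]_n) (s : 'M[R]_n) :
  root_system Rt ->
  G = gen_group (refl_mx @` Rt) ->
  finite_set G ->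
  special_involution Rt G s ->
  let G1 := gen_group (refl_mx @` (Rt `&` minus_eigsp s)) in
  let G2 := gen_group (refl_mx @` (Rt `&` plus_eigsp s)) in
  let F := fixed_set Rt s in
  (forall C, components F C -> contractible R C) /\
  (components F #= (G1 `*` G2))%card.
Proof.
move=> hRt hG hGfin hs /=.
exact: (main_result hRt hG hGfin hs).
Qed.
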